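(* Let $q=p^{m_0}$ with $p$ prime, let $\rho$ be a permutation of $\{0,1,2,\ldots\}$, let $\mathcal O=\mathbb{F}_q[[\pi]]\subset k_\infty=\mathbb{F}_q((\pi))$, let $U$ be the group of units of $\mathcal O$ and $U_1\subseteq U$ the units congruent to $1$ modulo $\pi$. Then, as sets, each of $\mathcal O$, $U$ and $U_1$ is mapped into itself by $\rho_\ast$.
   Context: For $y\in\mathbb{Z}_p$ written $q$-adically as $y=\sum_{j\ge0}c_jq^j$ with $0\le c_j<q$, set $\rho_\ast y:=\sum_{j\ge0}c_jq^{\rho(j)}$; this bijection of $\mathbb{Z}_p$ stabilizes both the nonnegative and the nonpositive integers (negative integers being regarded as elements of $\mathbb{Z}_p$). For $x=\sum_{j\gg-\infty}c_j\pi^j\in k_\infty$ with $c_j\in\mathbb{F}_q$, define $\rho_\ast x:=\sum_{j}c_j\pi^{\rho_\ast j}$; this is a continuous $\mathbb{F}_q$-linear automorphism of $k_\infty$. *)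

(* Defs.v *)
From HB Require Import structures.
From mathcomp Require Import all_boot all_order all_algebra.
From Stdlib Require Import ClassicalEpsilon.
Set Implicit Arguments. Unset Strict Implicit. Unset Printing Implicit Defensive.
Import Order.TTheory GRing.Theory Num.Theory.
Local Open Scope ring_scope.

(* Elements of k_oo = F_q((pi)) are represented by their coefficient
   functions c : int -> F (c j is the coefficient of pi^j); genuine Laurent
   series are those with support bounded below. *)
Definition laurent (F : finFieldType) (x : int -> F) : Prop :=
  exists N : int, forall j : int, j < N -> x j = 0.

(* The i-th q-adic digit of an integer z, regarded as an element of Z_p
   (q = p^m0): floor((z mod q^(i+1)) / q^i), with nonnegative remainder. *)
Definition qdigit (q : nat) (z : int) (i : nat) : int :=
  ((z %% (q ^ i.+1)%N%:Z)%Z %/ (q ^ i)%N%:Z)%Z.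

Definition rho_star_int (q : nat) (rho : nat -> nat) (j k : int) : Prop :=
  forall i : nat, qdigit q k (rho i) = qdigit q j i.

(* rho_* x = sum_j c_j pi^(rho_* j): the coefficient at k is c_j for the
   (unique, rho_* being a bijection of Z) j with rho_* j = k. *)
Definition rho_star (F : finFieldType) (q : nat) (rho : nat -> nat)
    (x : int -> F) (k : int) : F :=
  match excluded_middle_informative (exists j, rho_star_int q rho j k) with
  | left H => x (proj1_sig (constructive_indefinite_description _ H))
  | right _ => 0
  end.

Definition inO (F : finFieldType) (x : int -> F) : Prop :=
  forall j : int, j < 0 -> x j = 0.

Definition O_mul_coef (F : finFieldType) (x y : int -> F) (n : nat) : F :=
  \sum_(i < n.+1) x (Posz i) * y (Posz (n - i)%N).

Definition inU (F : finFieldType) (x : int -> F) : Prop :=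
  inO x /\ exists y : int -> F, inO y /\
    forall n : nat, O_mul_coef x y n = (n == 0%N)%:R.

Definition inU1 (F : finFieldType) (x : int -> F) : Prop :=
  inU x /\ forall j : int, j <= 0 -> x j - (j == 0)%:R = 0.

(* Main.v *)
Require Import Defs.
From HB Require Import structures.
From mathcomp Require Import all_boot all_order all_algebra.
From Stdlib Require Import ClassicalEpsilon.
From mathcomp Require Import zify.
Import Order.TTheory GRing.Theory Num.Theory.
Local Open Scope ring_scope.

Lemma qdigit_nat q m i : qdigit q (Posz m) i = Posz ((m %% q ^ i.+1) %/ q ^ i)%N.
Proof. by rewrite /qdigit modz_nat divz_nat. Qed.

Lemma qdigit_pos_large q m i : (1 < q)%N -> (m < q ^ i)%N -> qdigit q (Posz m) i = 0.
Proof.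
move=> hq h; rewrite qdigit_nat.
have h1 : (q ^ i <= q ^ i.+1)%N by rewrite leq_exp2l // ltnW.
by rewrite modn_small ?divn_small //; apply: leq_trans h1.
Qed.

Lemma qdigit_pos_nz q m : (1 < q)%N -> (0 < m)%N -> exists i, qdigit q (Posz m) i != 0.
Proof.
move=> hq hm; exists (trunc_log q m); rewrite qdigit_nat.
have /andP[h1 h2] := trunc_log_bounds hq hm.
rewrite modn_small // eqz_nat -lt0n divn_gt0 //.
by rewrite expn_gt0 ltnW.
Qed.

Lemma qdigit_neg_large q m i : (1 < q)%N -> (m < q ^ i)%N -> qdigit q (Negz m) i = Posz q.-1.
Proof.
move=> hq h; rewrite /qdigit.
have hQ : (m.+1 <= q ^ i.+1)%N by rewrite expnS (leq_trans h) // leq_pmull // ltnW.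
have hE : Negz m + (q ^ i.+1)%N%:Z = Posz (q ^ i.+1 - m.+1)%N.
  by rewrite NegzE addrC subzn.
have -> : (Negz m %% (q ^ i.+1)%N%:Z)%Z = Posz (q ^ i.+1 - m.+1)%N.
  rewrite -modzDr hE modz_small //.
  apply/andP; split => //; rewrite ltz_nat ltn_subrL /=; exact: leq_ltn_trans hQ.
rewrite divz_nat; congr Posz.
have -> : (q ^ i.+1 - m.+1 = q.-1 * q ^ i + (q ^ i - m.+1))%N.
  rewrite expnS; move: h; set Q := (q ^ i)%N => h.
  rewrite -{1}(prednK (ltnW hq)) mulSn; clearbody Q; move: (q.-1 * Q)%N => K; lia.
rewrite divnMDl ?expn_gt0 ?(ltnW hq) // divn_small ?addn0 //.
move: h; move: (q ^ i)%N => Q h; lia.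
Qed.

Lemma big_index (rho g : nat -> nat) : cancel rho g ->
  forall A B : nat, exists i, (A <= i)%N /\ (B <= rho i)%N.
Proof.
move=> K A B; exists (maxn A (\max_(n < B) g n).+1); split; first exact: leq_maxl.
rewrite leqNgt; apply/negP => hlt.
have := leq_bigmax (F := fun n : 'I_B => g n) (Ordinal hlt); rewrite /= K.
move: (\max_(n < B) g n) => M; lia.
Qed.

Lemma ltn_expl' q n : (1 < q)%N -> (n < q ^ n)%N.
Proof. by move=> hq; apply: ltn_expl. Qed.

Lemma large_exp q n i : (1 < q)%N -> (n <= i)%N -> (n < q ^ i)%N.
Proof.
move=> hq hi; apply: leq_trans (@ltn_expl' q n hq) _.
by rewrite leq_exp2l.
Qed.

Lemma qdigit0 q i : qdigit q 0 i = 0.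
Proof. by rewrite (qdigit_nat q 0) mod0n div0n. Qed.

Lemma rsi_zero q rho j : (1 < q)%N -> rho_star_int q rho j 0 -> j = 0.
Proof.
move=> hq H; case: j H => [m|m] H.
  case: m H => [//|m] H.
  have [i /eqP []] := @qdigit_pos_nz q m.+1 hq (ltn0Sn m).
  by rewrite -H qdigit0.
have := H m; rewrite qdigit0 qdigit_neg_large ?(@ltn_expl' q m hq) //.
by case: q hq H => [|[|q]].
Qed.

Lemma rsi_neg q rho g j k : (1 < q)%N -> cancel rho g ->
  rho_star_int q rho j k -> k < 0 -> j < 0.
Proof.
move=> hq K H; case: k H => [m'|m'] H //= _.
case: j H => [m|m] H //.
have [i [h1 h2]] := @big_index rho g K m m'.
have := H i; rewrite qdigit_pos_large ?large_exp // qdigit_neg_large ?large_exp //.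
by case: q hq H => [|[|q]].
Qed.

Section Inv.
Variable F : finFieldType.
Variables (a : F) (z : nat -> F).

Fixpoint invs (n : nat) : seq F :=
  match n with
  | 0%N => [:: a]
  | n'.+1 => rcons (invs n') (- a * \sum_(i < n'.+1) z i.+1 * nth 0 (invs n') (n' - i))
  end.

Lemma size_invs n : size (invs n) = n.+1.
Proof. by elim: n => //= n IH; rewrite size_rcons IH. Qed.

Lemma nth_invs n k : (k <= n)%N -> nth 0 (invs n) k = nth 0 (invs k) k.
Proof.
elim: n => [|n IH]; first by rewrite leqn0 => /eqP ->.
rewrite leq_eqVlt => /orP [/eqP -> //|hk].
by rewrite /= nth_rcons size_invs hk IH.
Qed.

Definition yv n := nth 0 (invs n) n.

Lemma yvS n : yv n.+1 = - a * \sum_(i < n.+1) z i.+1 * yv (n - i).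
Proof.
rewrite /yv /= nth_rcons size_invs ltnn eqxx; congr (_ * _).
by apply: eq_bigr => i _; rewrite nth_invs // leq_subr.
Qed.
End Inv.

Lemma inv_exists (F : finFieldType) (x : int -> F) : x 0 != 0 ->
  exists y : int -> F, inO y /\ forall n : nat, O_mul_coef x y n = (n == 0%N)%:R.
Proof.
move=> h0.
pose z := fun n : nat => x (Posz n).
pose Y := fun j : int => match j with Posz k => @yv F (x 0)^-1 z k | Negz _ => 0 end.
exists Y; split; first by case.
case=> [|n].
  by rewrite /O_mul_coef big_ord1 /= /yv /= mulfV.
rewrite /O_mul_coef big_ord_recl /= subn0 yvS.
have -> : \sum_(i < n.+1) x (Posz (lift ord0 i)) * Y (Posz (n.+1 - lift ord0 i)%N)
   = \sum_(i < n.+1) z i.+1 * @yv F (x 0)^-1 z (n - i).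
  by apply: eq_bigr => i _; rewrite /= subSS.
by rewrite mulrA mulrN mulfV // mulN1r addNr.
Qed.

Theorem proposition7p10 (p m0 : nat) (F : finFieldType) (rho : nat -> nat)
  (hp : prime p) (hm0 : (0 < m0)%N) (hF : #|F| = (p ^ m0)%N)
  (hrho : bijective rho) :
  (forall x : int -> F, inO x -> inO (rho_star (p ^ m0)%N rho x)) /\
  (forall x : int -> F, inU x -> inU (rho_star (p ^ m0)%N rho x)) /\
  (forall x : int -> F, inU1 x -> inU1 (rho_star (p ^ m0)%N rho x)).
Proof.
have hq : (1 < p ^ m0)%N.
  have := prime_gt1 hp; clear hF; case: m0 hm0 => // m _ h; rewrite expnS.
  have h2 : (0 < p ^ m)%N by rewrite expn_gt0 ltnW.
  move: (p ^ m)%N h2 => P h2; nia.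
clear hF; move: (p ^ m0)%N hq => q hq.
have [g K _] := hrho.
have hO : forall x : int -> F, inO x -> inO (rho_star q rho x).
  move=> x hx k hk; rewrite /rho_star; case: excluded_middle_informative => // H.
  case: constructive_indefinite_description => j /= hj.
  by apply: hx; apply: (@rsi_neg q rho g _ _ hq K hj hk).
have h0 : forall x : int -> F, rho_star q rho x 0 = x 0.
  move=> x; rewrite /rho_star; case: excluded_middle_informative => [H|H].
    by case: constructive_indefinite_description => j /= hj; rewrite (@rsi_zero q rho _ hq hj).
  by exfalso; apply: H; exists 0 => i; rewrite !qdigit0.
have hU : forall x : int -> F, inU x -> inU (rho_star q rho x).
  move=> x [hx [y [hy hxy]]]; split; first exact: hO.
  apply: inv_exists; rewrite h0.
  apply/eqP => e; have := hxy 0%N; rewrite /O_mul_coef big_ord1 /= e mul0r.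
  by move/eqP; rewrite eq_sym oner_eq0.
split => //; split => // x [hx hx1]; split; first exact: hU.
move=> j hj; have [->|hne] := eqVneq j 0; first by rewrite h0; apply: hx1.
have hlt : j < 0 by rewrite lt_neqAle hne hj.
by rewrite (hO _ hx.1 _ hlt) mulr0n subr0.
Qed.
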